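(* Let $V_{\mathrm{total}}\ge0$, $B_{\mathrm{total}}>0$, $R^S_{\mathrm{total}}>0$, $F_{\mathrm{total}}>0$. Problem (P2): minimize $\max_uT_u^{\eta\text{-opt}}(B_u,R_u^S,F_u)$ over $B_u>0$, $R_u^S>0$, $F_u>0$ ($u=1,\dots,U$) subject to $\sum_uV_u^{\eta\text{-opt}}(B_u,R_u^S,F_u)\le V_{\mathrm{total}}$, $\sum_uB_u\le B_{\mathrm{total}}$, $\sum_uR_u^S\le R^S_{\mathrm{total}}$, $\sum_uF_u\le F_{\mathrm{total}}$. Problem (P3): minimize $\max_u\frac{D_u}{B_ur_u}$ over $B_u\ge0$, $R_u^S\ge0$, $F_u\ge0$ subject to $\sum_uB_u\le B_{\mathrm{total}}$, $\sum_uR_u^S\le R^S_{\mathrm{total}}$, $\sum_uF_u\le F_{\mathrm{total}}$, $R_u^S\le B_ur_u\le\frac{R_u^S}{\zeta_u}$ for all $u$, and $\frac{F_u}{\rho_u}=\frac{B_ur_u-R_u^S}{1-\zeta_u}$ for all $u$ (with the convention $D_u/0=+\infty$). Then the optimal values (infima) of (P2) and (P3) are equal.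
   Context: There are users $u=1,\dots,U$, each with constants $D_u>0$, $r_u>0$, $\rho_u>0$, $\zeta_u\in(0,1)$. The functions $T_u^{\eta\text{-opt}}(B_u,R_u^S,F_u)$ and $V_u^{\eta\text{-opt}}(B_u,R_u^S,F_u)$ (for $B_u,R_u^S,F_u>0$) are defined by six exhaustive cases (with $c_u=B_ur_u$): 1. $c_u<R_u^S$: $T^{\eta\text{-opt}}_u=\frac{D_u}{c_u}$, $V^{\eta\text{-opt}}_u=0$. 2. $R_u^S\le c_u<\frac{R_u^S}{\zeta_u}$, $\frac{F_u}{\rho_u}<\frac{c_u-R_u^S}{1-\zeta_u}$: $T^{\eta\text{-opt}}_u=\frac{D_u\rho_u}{F_u(1-\zeta_u)+\rho_uR_u^S}$, $V^{\eta\text{-opt}}_u=\frac{D_u}{c_u}[c_u-R_u^S-(1-\zeta_u)\frac{F_u}{\rho_u}]$. 3. $R_u^S\le c_u<\frac{R_u^S}{\zeta_u}$, $\frac{F_u}{\rho_u}\ge\frac{c_u-R_u^S}{1-\zeta_u}$: $T^{\eta\text{-opt}}_u=\frac{D_u}{c_u}$, $V^{\eta\text{-opt}}_u=0$. 4. $c_u\ge\frac{R_u^S}{\zeta_u}$, $\frac{F_u}{\rho_u}<\frac{R_u^S}{\zeta_u}$: $T^{\eta\text{-opt}}_u=\frac{D_u\rho_u}{F_u(1-\zeta_u)+\rho_uR_u^S}$, $V^{\eta\text{-opt}}_u=\frac{D_u}{c_u}[c_u-R_u^S-(1-\zeta_u)\frac{F_u}{\rho_u}]$. 5. $c_u\ge\frac{R_u^S}{\zeta_u}$,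 $\frac{R_u^S}{\zeta_u}\le\frac{F_u}{\rho_u}<c_u$: $T^{\eta\text{-opt}}_u=\frac{\zeta_uD_u}{R_u^S}$, $V^{\eta\text{-opt}}_u=\frac{D_u}{c_u}[c_u-R_u^S-(1-\zeta_u)\frac{F_u}{\rho_u}]$. 6. $c_u\ge\frac{R_u^S}{\zeta_u}$, $\frac{F_u}{\rho_u}\ge c_u$: $T^{\eta\text{-opt}}_u=\frac{\zeta_uD_u}{R_u^S}$, $V^{\eta\text{-opt}}_u=\frac{D_u}{c_u}(\zeta_uc_u-R_u^S)$. *)

(* Defs.v *)
From HB Require Import structures.
From mathcomp Require Import all_boot all_order all_algebra.
From mathcomp Require Import all_classical all_reals ereal.
Set Implicit Arguments. Unset Strict Implicit. Unset Printing Implicit Defensive.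
Import Order.TTheory GRing.Theory Num.Theory.
Local Open Scope ring_scope.

Section Defs.
Variable R : realType.

Definition T_opt (D r rho zeta B RS F : R) : R :=
  let c := B * r in
  if c < RS then D / c
  else if c < RS / zeta then
    (if F / rho < (c - RS) / (1 - zeta)
     then D * rho / (F * (1 - zeta) + rho * RS)
     else D / c)
  else if F / rho < RS / zeta then D * rho / (F * (1 - zeta) + rho * RS)
  else if F / rho < c then zeta * D / RS
  else zeta * D / RS.

Definition V_opt (D r rho zeta B RS F : R) : R :=
  let c := B * r in
  if c < RS then 0
  else if c < RS / zeta then
    (if F / rho < (c - RS) / (1 - zeta)
     then D / c * (c - RS - (1 - zeta) * (F / rho))
     else 0)
  else if F / rho < RS / zeta then D / c * (c - RS - (1 - zeta) * (F / rho))
  else if F / rho < c then D / c * (c - RS - (1 - zeta) * (F / rho))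
  else D / c * (zeta * c - RS).

Definition ediv_inf (D c : R) : \bar R :=
  if c == 0 then +oo%E else (D / c)%:E.

End Defs.

(* Main.v *)
Require Import Defs.
From HB Require Import structures.
From mathcomp Require Import all_boot all_order all_algebra.
From mathcomp Require Import all_classical all_reals ereal.
From mathcomp Require Import ring lra.
Import Order.TTheory GRing.Theory Num.Theory.
Local Open Scope ring_scope.

Section L.
Variable R : realType.
Implicit Types D r rho z B RS F : R.

Lemma T_gen D r rho z B RS F : 0 < D -> 0 < r -> 0 < rho -> 0 < z < 1 ->
  0 < B -> 0 < RS -> 0 < F ->
  exists e, 0 < e /\ T_opt D r rho z B RS F = D / e /\ e <= B * r /\
     e <= RS / z /\ e <= RS + (1 - z) * (F / rho).
Proof.
move=> hD hr hrho /andP[hz0 hz1] hB hRS hF.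
rewrite /T_opt.
have hc : 0 < B * r by rewrite mulr_gt0.
set c := B * r in hc *.
have hf : 0 < F / rho by rewrite divr_gt0.
set f := F / rho in hf *.
have hs : RS = RS / z * z by rewrite divfK // gt_eqF.
set s := RS / z in hs *.
have hz : 0 < 1 - z by lra.
have hzn : 1 - z != 0 by rewrite gt_eqF.
have hrhon : rho != 0 by rewrite gt_eqF.
case: ifP => h1.
  exists c; split => //; split => //; split => //; split; nra.
case: ifP => h2.
  case: ifP => h3.
    exists (RS + (1 - z) * f); split; first nra.
    split.
      have hne : F * (1 - z) + rho * RS != 0 by rewrite gt_eqF //; nra.
      have hne2 : RS + (1 - z) * f != 0 by rewrite gt_eqF //; nra.
      rewrite /f in hne2 *; field; rewrite ?hrhon /= gt_eqF //; nra.
    move: h3; rewrite ltr_pdivlMr // => h3.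
    split; first lra.
    split; lra.
  move: h3 => /negbT; rewrite -leNgt ler_pdivrMr // => h3.
  exists c; split => //; split => //; split => //; split; lra.
case: ifP => h3.
  have hsc : s <= c by move/negbT: h2; rewrite -leNgt.
  exists (RS + (1 - z) * f); split; first nra.
  split.
    have hne : F * (1 - z) + rho * RS != 0 by rewrite gt_eqF //; nra.
    have hne2 : RS + (1 - z) * f != 0 by rewrite gt_eqF //; nra.
    rewrite /f in hne2 *; field; rewrite ?hrhon /= gt_eqF //; nra.
  split; first nra.
  split; nra.
have hsc : s <= c by move/negbT: h2; rewrite -leNgt.
have hfs : s <= f by move/negbT: h3; rewrite -leNgt.
have hT : z * D / RS = D / s by rewrite /s; field; rewrite !gt_eqF.
case: ifP => _; (exists s; split; [nra|split; [exact: hT|split; [lra|split; nra]]]).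
Qed.

Lemma T_eq D r rho z B RS F : 0 < D -> 0 < r -> 0 < rho -> 0 < z < 1 ->
  0 < B * r -> RS <= B * r <= RS / z -> (B * r - RS) / (1 - z) <= F / rho ->
  T_opt D r rho z B RS F = D / (B * r) /\ V_opt D r rho z B RS F = 0.
Proof.
move=> hD hr hrho /andP[hz0 hz1] hc /andP[h1 h2] h3.
rewrite /T_opt /V_opt.
set c := B * r in hc h1 h2 h3 *.
have hz : 0 < 1 - z by lra.
have hs : RS = RS / z * z by rewrite divfK // gt_eqF.
set s := RS / z in hs h2 *.
move: h3; rewrite ler_pdivrMr // => h3.
set f := F / rho in h3 *.
rewrite ltNge h1 /=.
case: ifP => h4.
  by rewrite ltNge ler_pdivrMr // h3.
have hcs : c = s by apply/le_anti; rewrite h2 /= leNgt h4.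
have hfs : (f < s) = false by apply/negbTE; rewrite -leNgt; nra.
have hfc : (f < c) = false by apply/negbTE; rewrite -leNgt; nra.
rewrite hfs hfc.
have hs0 : 0 < s by rewrite -hcs.
have hsn : s != 0 by rewrite gt_eqF.
split.
  rewrite hcs hs; field; rewrite ?hsn ?gt_eqF //.
rewrite hcs; have -> : z * s - RS = 0 by rewrite hs; ring.
by rewrite mulr0.
Qed.

Lemma T_scaled D r rho z B RS F l d : 0 < D -> 0 < r -> 0 < rho -> 0 < z < 1 ->
  0 < B * r -> RS <= B * r <= RS / z -> F / rho = (B * r - RS) / (1 - z) ->
  0 < l -> 0 <= d ->
  T_opt D r rho z (l * B) (l * RS) (l * F + d) = D / (l * (B * r)) /\
  V_opt D r rho z (l * B) (l * RS) (l * F + d) = 0.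
Proof.
move=> hD hr hrho hz hc /andP[h1 h2] hf hl hd.
have hz1 : 0 < 1 - z by case/andP: hz => _; rewrite subr_gt0.
have e1 : l * B * r = l * (B * r) by rewrite mulrA.
have e2 : l * RS / z = l * (RS / z) by rewrite mulrA.
rewrite -e1; apply: T_eq => //; first by rewrite e1 mulr_gt0.
  by rewrite e1 e2 !ler_pM2l // h1.
rewrite e1.
have -> : (l * (B * r) - l * RS) / (1 - z) = l * (F / rho) by rewrite hf; field; rewrite gt_eqF.
have -> : (l * F + d) / rho = l * (F / rho) + d / rho by field; rewrite gt_eqF.
have : 0 <= d / rho by rewrite divr_ge0 // ltW.
lra.
Qed.
Lemma frac_lt1 (K e : R) : 0 < K -> 0 < e -> K / (K + e) < 1.
Proof. by move=> hK he; rewrite ltr_pdivrMr ?addr_gt0 // mul1r ltrDl. Qed.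
End L.
Arguments T_scaled {R D r rho z B RS F l d}.
Arguments T_gen {R D r rho z B RS F}.

Local Open Scope classical_set_scope.
Theorem theorem3 (R : realType) (U : nat)
  (D r rho zeta : 'I_U -> R)
  (hD : forall u, 0 < D u) (hr : forall u, 0 < r u) (hrho : forall u, 0 < rho u)
  (hzeta : forall u, 0 < zeta u < 1)
  (Vtot Btot RStot Ftot : R)
  (hV : 0 <= Vtot) (hB : 0 < Btot) (hRS : 0 < RStot) (hF : 0 < Ftot) :
  (* optimal value of (P2) *)
  ereal_inf [set x : \bar R | exists B RS F : 'I_U -> R,
      (forall u, 0 < B u /\ 0 < RS u /\ 0 < F u) /\
      \sum_(u < U) V_opt (D u) (r u) (rho u) (zeta u) (B u) (RS u) (F u) <= Vtot /\
      \sum_(u < U) B u <= Btot /\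
      \sum_(u < U) RS u <= RStot /\
      \sum_(u < U) F u <= Ftot /\
      x = \big[Order.max/-oo%E]_(u < U)
            (T_opt (D u) (r u) (rho u) (zeta u) (B u) (RS u) (F u))%:E]
  =
  (* optimal value of (P3) *)
  ereal_inf [set x : \bar R | exists B RS F : 'I_U -> R,
      (forall u, 0 <= B u /\ 0 <= RS u /\ 0 <= F u) /\
      \sum_(u < U) B u <= Btot /\
      \sum_(u < U) RS u <= RStot /\
      \sum_(u < U) F u <= Ftot /\
      (forall u, RS u <= B u * r u <= RS u / zeta u) /\
      (forall u, F u / rho u = (B u * r u - RS u) / (1 - zeta u)) /\
      x = \big[Order.max/-oo%E]_(u < U) ediv_inf (D u) (B u * r u)].
Proof.
apply/le_anti/andP; split.
- apply/ereal_infP => y [B [RS [F [hpos [hBs [hRs [hFs [hc [hf ->]]]]]]]]].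
  have [allpos|] := boolP [forall u, 0 < B u].
  + apply/lee_addgt0Pr => e0 he0.
    have [e he ee] : exists2 e : R, 0 < e & e = e0 by exists e0.
    rewrite -ee; clear ee he0 e0.
    have hBp u : 0 < B u by exact: (forallP allpos u).
    have hcp u : 0 < B u * r u by rewrite mulr_gt0.
    pose K := 1 + \sum_(u < U) D u / (B u * r u).
    have hsum : 0 <= \sum_(u < U) D u / (B u * r u).
      by apply: sumr_ge0 => i _; rewrite divr_ge0 // ltW.
    have hK u : D u / (B u * r u) <= K.
      rewrite /K (bigD1 u) //=.
      have : 0 <= \sum_(i < U | i != u) D i / (B i * r i).
        by apply: sumr_ge0 => i _; rewrite divr_ge0 // ltW.
      have : 0 <= D u / (B u * r u) by rewrite divr_ge0 // ltW.
      lra.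
    have hK0 : 0 < K by rewrite /K; lra.
    clearbody K.
    pose l := K / (K + e).
    have hl0 : 0 < l by rewrite divr_gt0 // addr_gt0.
    have hl1 : l < 1 by exact: frac_lt1.
    pose d := (1 - l) * Ftot / U%:R.
    have hd : 0 <= d by rewrite /d divr_ge0 // mulr_ge0 // ltW // subr_gt0.
    have hRSp u : 0 < RS u.
      case/andP: (hc u) => _ h2; have := hcp u; have [hz0 _] := andP (hzeta u).
      move=> h; have : 0 < RS u / zeta u by apply: lt_le_trans h h2.
      by rewrite pmulr_lgt0 // invr_gt0.
    have hTs u := T_scaled (hD u) (hr u) (hrho u) (hzeta u) (hcp u) (hc u) (hf u) hl0 hd.
    apply: ge_ereal_inf.
    exists (\big[Order.max/-oo%E]_(u < U) (T_opt (D u) (r u) (rho u) (zeta u) (l * B u) (l * RS u) (l * F u + d))%:E).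
      exists (fun u => l * B u), (fun u => l * RS u), (fun u => l * F u + d).
      split.
        move=> u; split; first by rewrite mulr_gt0.
        split; first by rewrite mulr_gt0.
        have hU : (0 < U)%N by case: u => /= i; apply: leq_ltn_trans.
        have hd0 : 0 < d by rewrite /d divr_gt0 ?ltr0n // mulr_gt0 // subr_gt0.
        have := proj1 (hpos u); have := proj2 (proj2 (hpos u)).
        move=> hF0 _; have : 0 <= l * F u by rewrite mulr_ge0 // ltW.
        lra.
      split.
        rewrite (eq_bigr (fun _ => 0)); last by move=> u _; exact: (proj2 (hTs u)).
        by rewrite big1.
      split.
        rewrite -mulr_sumr.
        have : 0 <= \sum_(u < U) B u by apply: sumr_ge0 => i _; case: (hpos i).
        nra.
      split.
        rewrite -mulr_sumr.
        have : 0 <= \sum_(u < U) RS u by apply: sumr_ge0 => i _; case: (hpos i) => _ [].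
        nra.
      split; last by [].
      rewrite big_split /= -mulr_sumr sumr_const card_ord.
      have hdU : d *+ U <= (1 - l) * Ftot.
        rewrite -mulr_natr /d; case: (posnP U) => [->|hU].
          by rewrite mulr0 mulr_ge0 // ltW // subr_gt0.
        by rewrite divfK // pnatr_eq0 -lt0n.
      have : 0 <= \sum_(u < U) F u by apply: sumr_ge0 => i _; case: (hpos i) => _ [].
      nra.
    apply/bigmax_leP; split; first by rewrite leNye.
    move=> u _; rewrite (proj1 (hTs u)).
    apply: (@le_trans _ _ ((D u / (B u * r u) + e)%:E)).
      rewrite lee_fin.
      have -> : D u / (l * (B u * r u)) = (D u / (B u * r u)) * (K + e) / K.
        rewrite /l; field; rewrite !gt_eqF ?addr_gt0 ?hcp ?hr //.
      rewrite ler_pdivrMr //.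
      have := hK u; have : 0 <= D u / (B u * r u) by rewrite divr_ge0 // ltW.
      nra.
    rewrite EFinD leeD2r //.
    have := le_bigmax (-oo%E) (fun u => ediv_inf (D u) (B u * r u)) u.
    by rewrite /ediv_inf gt_eqF.
  + rewrite negb_forall => /existsP[u hu].
    have hB0 : B u = 0 by apply/le_anti; rewrite leNgt hu; case: (hpos u).
    have := le_bigmax (-oo%E) (fun u => ediv_inf (D u) (B u * r u)) u.
    rewrite /ediv_inf hB0 mul0r eqxx => h.
    exact: le_trans (leey _) h.
- apply/ereal_infP => x [B [RS [F [hpos [hVs [hBs [hRs [hFs ->]]]]]]]].
  pose T u := T_opt (D u) (r u) (rho u) (zeta u) (B u) (RS u) (F u).
  pose e u := D u / T u.
  have he u : 0 < e u /\ D u / e u = T u /\ e u <= B u * r u /\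
      e u <= RS u / zeta u /\ e u <= RS u + (1 - zeta u) * (F u / rho u).
    have [hb [hrs hff]] := hpos u.
    have [e0 [h0 [hT rest]]] := T_gen (hD u) (hr u) (hrho u) (hzeta u) hb hrs hff.
    have he0 : e u = e0 by rewrite /e /T hT; field; rewrite !gt_eqF.
    by rewrite he0 /T hT.
  clearbody e.
  pose RSp u := if e u <= RS u then e u else RS u.
  apply: ge_ereal_inf; exists (\big[Order.max/-oo%E]_(u < U) (T u)%:E) => //.
  exists (fun u => e u / r u), RSp, (fun u => rho u * (e u - RSp u) / (1 - zeta u)).
  have hz u : 0 < 1 - zeta u by case/andP: (hzeta u) => _; rewrite subr_gt0.
  have hRSp u : e u - RSp u <= (1 - zeta u) * (F u / rho u) /\ 0 <= e u - RSp u /\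
      RSp u <= RS u /\ 0 <= RSp u /\ RSp u <= e u <= RSp u / zeta u.
    have [he0 [_ [_ [h1 h2]]]] := he u.
    have [hb [hrs hff]] := hpos u.
    have hq : 0 <= F u / rho u by rewrite divr_ge0 // ltW.
    have [hz0 hz1] := andP (hzeta u).
    rewrite /RSp; case: ifP => hle.
      rewrite subrr lexx ler_pdivlMr //=; split; first nra.
      split => //; split => //; split; [lra|nra].
    move/negbT: hle; rewrite -ltNge => hlt.
    split; first lra. split; first lra. split; first lra. split; first lra.
    by rewrite h1 ltW.
  split.
    move=> u; have [he0 _] := he u; have [h1 [h2 [_ [h3 _]]]] := hRSp u.
    split; first by rewrite divr_ge0 // ltW.
    split => //.
    apply: divr_ge0; [apply: mulr_ge0; [exact: ltW| exact: h2] | exact: ltW].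
  split.
    apply: le_trans hBs; apply: ler_sum => u _.
    by rewrite ler_pdivrMr //; case: (he u) => _ [_ []].
  split.
    by apply: le_trans hRs; apply: ler_sum => u _; case: (hRSp u) => _ [_ []].
  split.
    apply: le_trans hFs; apply: ler_sum => u _.
    rewrite ler_pdivrMr // -ler_pdivlMl //.
    have [h _] := hRSp u.
    by have -> : (rho u)^-1 * (F u * (1 - zeta u)) = (1 - zeta u) * (F u / rho u) by ring.
  split.
    by move=> u; rewrite divfK ?gt_eqF //; case: (hRSp u) => _ [_ [_ []]].
  split.
    by move=> u; rewrite divfK ?gt_eqF //; field; rewrite !gt_eqF.
  apply: eq_bigr => u _.
  have [he0 [hDe _]] := he u.
  rewrite /ediv_inf divfK; last by rewrite gt_eqF.
  by rewrite (gt_eqF he0) hDe.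
Qed.
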